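(* Fix an instance of MCND and a partial aggregation $\mathcal{B}$ (see context). (i) If $(\bar x,\bar y)$ is a feasible solution of the LP relaxation of the DA formulation, then there exist values $z$ of the artificial variables such that $(x,y,z)$, with $x_{ij}^D=\sum_{k\in D}\bar x_{ij}^k$ for all $(i,j)\in\mathcal{A}$, $b\in\mathcal{B}$, $D\in\mathcal{G}_b^{ij}$, and $y_{ij}=\bar y_{ij}$ for all $(i,j)\in\mathcal{A}$, is a feasible solution of the LP relaxation of the PAe formulation built on $\mathcal{B}$; this solution has the same objective value as $(\bar x,\bar y)$. (ii) The converse fails in general: there exist an instance and a partial aggregation $\mathcal{B}$ for which the LP relaxation of PAe has a feasible solution $(x,y,z)$ such that there is no feasible solution $(\bar x,\bar y)$ of the LP relaxation of DA with $\bar y=y$ and $x_{ij}^D=\sum_{k\in D}\bar x_{ij}^k$ for all $(i,j),b,D$. (That is, DA is stronger than PAe.)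
   Context: An instance of MCND consists of a directed graph $G=(\mathcal{N},\mathcal{A})$, a finite set $\mathcal{K}$ of commodities, each $k\in\mathcal{K}$ having an origin $o^k\in\mathcal{N}$, a destination $s^k\in\mathcal{N}$ and a demand $d^k\ge 0$, and for each arc $(i,j)\in\mathcal{A}$ a capacity $u_{ij}$, a per-unit flow cost $c_{ij}$ and a fixed cost $f_{ij}$, all nonnegative. Let $o_i^k=1$ if $i=o^k$ and $0$ otherwise, $s_i^k=1$ if $i=s^k$ and $0$ otherwise, $\mathcal{N}_i^+=\{j:(i,j)\in\mathcal{A}\}$, $\mathcal{N}_i^-=\{j:(j,i)\in\mathcal{A}\}$. LP relaxation of DA: variables $x_{ij}^k\ge 0$ ($k\in\mathcal{K},(i,j)\in\mathcal{A}$) and $0\le y_{ij}\le 1$; minimize $\sum_{k}\sum_{(i,j)}c_{ij}x_{ij}^k+\sum_{(i,j)}f_{ij}y_{ij}$ subject to $\sum_{j\in\mathcal{N}_i^+}x_{ij}^k-\sum_{j\in\mathcal{N}_i^-}x_{ji}^k=(o_i^k-s_i^k)d^k$ for all $k,i$; $\sum_k x_{ij}^k\le u_{ij}y_{ij}$ for all $(i,j)$; $x_{ij}^k\le d^k y_{ij}$ for all $k,(i,j)$. Dispersion: a nonempty set $\mathcal{K}_b\subseteq\mathcal{K}$ of commodities sharing a common origin, together with, for every arc $(i,j)\in\mathcal{A}$, a partition of $\mathcal{K}_b$ into $\mathcal{K}_b^{ij}$ (commodities aggregated on $(i,j)$) and $\mathcal{D}_b^{ij}$ (commodities disaggregated on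 $(i,j)$); either part may be empty. Let $\mathcal{G}_b^{ij}$ be the family consisting of the set $\mathcal{K}_b^{ij}$ (if nonempty) together with the singletons $\{k\}$, $k\in\mathcal{D}_b^{ij}$. A partial aggregation is a set $\mathcal{B}$ of dispersions such that every $k\in\mathcal{K}$ lies in $\mathcal{K}_b$ for exactly one $b\in\mathcal{B}$. LP relaxation of PA (for $\mathcal{B}$): variables $x_{ij}^D\ge0$ for $(i,j)\in\mathcal{A}$, $b\in\mathcal{B}$, $D\in\mathcal{G}_b^{ij}$ (since the $\mathcal{K}_b$ are disjoint, $D$ determines $b$), and $0\le y_{ij}\le1$; minimize $\sum_{(i,j)}c_{ij}\sum_{b}\sum_{D\in\mathcal{G}_b^{ij}}x_{ij}^D+\sum_{(i,j)}f_{ij}y_{ij}$ subject to: for all $b\in\mathcal{B}$, $i\in\mathcal{N}$: $\sum_{j\in\mathcal{N}_i^+}\sum_{D\in\mathcal{G}_b^{ij}}x_{ij}^D-\sum_{j\in\mathcal{N}_i^-}\sum_{D\in\mathcal{G}_b^{ji}}x_{ji}^D=\sum_{k\in\mathcal{K}_b}(o_i^k-s_i^k)d^k$; for all $(i,j)$: $\sum_b\sum_{D\in\mathcal{G}_b^{ij}}x_{ij}^D\le u_{ij}y_{ij}$; for all $(i,j),b,D\in\mathcal{G}_b^{ij}$: $x_{ij}^D\le(\sum_{k\in D}d^k)y_{ij}$. LP relaxation of PAe: the PA LP plus the following. For $b\in\mathcal{B}$, $i\in\mathcal{N}$ let $\mathcal{L}_b^i=\{k\in\mathcal{K}_b:k\in\mathcal{D}_b^{ji}\text{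 for some }j\in\mathcal{N}_i^-\text{ or }k\in\mathcal{D}_b^{ij}\text{ for some }j\in\mathcal{N}_i^+\}$; $\mathcal{M}_b^i=\{\{k\}:k\in\mathcal{L}_b^i\}\cup\{\mathcal{K}_b\setminus\mathcal{L}_b^i\}$ (the last set only if nonempty); $\check{\mathcal{T}}_b^i$ = the set of distinct nonempty sets among $\{\mathcal{K}_b^{ji}:j\in\mathcal{N}_i^-\}$; $\hat{\mathcal{T}}_b^i$ = the set of distinct nonempty sets among $\{\mathcal{K}_b^{ij}:j\in\mathcal{N}_i^+\}$. For every $(b,i)$ with $\mathcal{L}_b^i\neq\emptyset$ add variables $z_{CD}^{ib}\ge0$ for $C\in\check{\mathcal{T}}_b^i$, $D\in\mathcal{M}_b^i$ with $C\cap D\ne\emptyset$, and $z_{DC}^{ib}\ge0$ for $D\in\mathcal{M}_b^i$, $C\in\hat{\mathcal{T}}_b^i$ with $C\cap D\neq\emptyset$ (these have zero cost), and constraints: for each $D\in\mathcal{M}_b^i$: $\sum_{j\in\mathcal{N}_i^+:\,D=\{k\},k\in\mathcal{D}_b^{ij}}x_{ij}^{D}-\sum_{j\in\mathcal{N}_i^-:\,D=\{k\},k\in\mathcal{D}_b^{ji}}x_{ji}^{D}+\sum_{C\in\hat{\mathcal{T}}_b^i:C\cap D\neq\emptyset}z_{DC}^{ib}-\sum_{C\in\check{\mathcal{T}}_b^i:C\cap D\ne\emptyset}z_{CD}^{ib}=\sum_{k\in D}(o_i^k-s_i^k)d^k$; for each $C\in\check{\mathcal{T}}_b^i$: $\sum_{D\in\mathcal{M}_b^i:C\cap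 D\ne\emptyset}z_{CD}^{ib}-\sum_{j\in\mathcal{N}_i^-:\mathcal{K}_b^{ji}=C}x_{ji}^C=0$; for each $C\in\hat{\mathcal{T}}_b^i$: $\sum_{j\in\mathcal{N}_i^+:\mathcal{K}_b^{ij}=C}x_{ij}^C-\sum_{D\in\mathcal{M}_b^i:C\cap D\neq\emptyset}z_{DC}^{ib}=0$. The objective is that of PA. *)

(* Defs.v *)
From HB Require Import structures.
From mathcomp Require Import all_boot all_order all_algebra.
Unset Printing Implicit Defensive.
Import Order.TTheory GRing.Theory Num.Theory.
Local Open Scope ring_scope.

(* An MCND instance: finite node set, is_arc relation (the is_arc set A, is_arc (i,j)
   present iff [is_arc i j]), is_arc data (capacity u, unit cost c, fixed cost f)
   and commodities with origin, destination, demand. *)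
Record mcnd (R : realFieldType) := MCND {
  node : finType;
  com : finType;
  is_arc : rel node;
  cap : node -> node -> R;
  ucost : node -> node -> R;
  fcost : node -> node -> R;
  orig : com -> node;
  dest : com -> node;
  dem : com -> R }.
Arguments node {R} _.
Arguments com {R} _.
Arguments is_arc {R} _ _ _.
Arguments cap {R} _ _ _.
Arguments ucost {R} _ _ _.
Arguments fcost {R} _ _ _.
Arguments orig {R} _ _.
Arguments dest {R} _ _.
Arguments dem {R} _ _.

Definition mcnd_wf {R : realFieldType} (I : mcnd R) : Prop :=
  irreflexive (is_arc I) /\
  (forall k, 0 <= dem I k) /\
  (forall i j, is_arc I i j -> [/\ 0 <= cap I i j, 0 <= ucost I i j & 0 <= fcost I i j]).

Definition supply {R : realFieldType} (I : mcnd R) (k : com I) (i : node I) : R :=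
  (((i == orig I k)%:R - (i == dest I k)%:R) * dem I k).

Definition DA_feasible {R : realFieldType} (I : mcnd R)
  (x : com I -> node I -> node I -> R) (y : node I -> node I -> R) : Prop :=
  (forall i j, is_arc I i j -> 0 <= y i j <= 1) /\
  (forall k i j, is_arc I i j -> 0 <= x k i j) /\
  (forall k i, \sum_(j | is_arc I i j) x k i j - \sum_(j | is_arc I j i) x k j i
               = supply I k i) /\
  (forall i j, is_arc I i j -> \sum_k x k i j <= cap I i j * y i j) /\
  (forall k i j, is_arc I i j -> x k i j <= dem I k * y i j).

Definition DA_obj {R : realFieldType} (I : mcnd R)
  (x : com I -> node I -> node I -> R) (y : node I -> node I -> R) : R :=
  \sum_i \sum_(j | is_arc I i j) (ucost I i j * \sum_k x k i j + fcost I i j * y i j).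

(* A partial aggregation: a finite family of dispersions b, each with its
   commodity set K_b and, for each is_arc (i,j), the aggregated part K_b^{ij};
   the disaggregated part is D_b^{ij} = K_b \ K_b^{ij}. *)
Record paggr {R : realFieldType} (I : mcnd R) := PAggr {
  disp : finType;
  Kb : disp -> {set com I};
  agg : disp -> node I -> node I -> {set com I} }.
Arguments disp {R I} _.
Arguments Kb {R I} _ _.
Arguments agg {R I} _ _ _ _.

Definition paggr_wf {R : realFieldType} {I : mcnd R} (B : paggr I) : Prop :=
  (forall b, Kb B b != set0) /\
  (forall b, {in Kb B b &, forall k k', orig I k = orig I k'}) /\
  (forall k, exists! b, k \in Kb B b) /\
  (forall b i j, is_arc I i j -> agg B b i j \subset Kb B b).

Section PAdefs.
Context {R : realFieldType} {I : mcnd R} (B : paggr I).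

Definition Dis (b : disp B) (i j : node I) : {set com I} := Kb B b :\: agg B b i j.

Definition G (b : disp B) (i j : node I) : {set {set com I}} :=
  (if agg B b i j == set0 then set0 else [set agg B b i j])
  :|: [set [set k] | k in Dis b i j].

Definition Lset (b : disp B) (i : node I) : {set com I} :=
  [set k in Kb B b | [exists j, (is_arc I j i && (k \in Dis b j i))
                               || (is_arc I i j && (k \in Dis b i j))]].

Definition M (b : disp B) (i : node I) : {set {set com I}} :=
  [set [set k] | k in Lset b i]
  :|: (if Kb B b :\: Lset b i == set0 then set0 else [set Kb B b :\: Lset b i]).

Definition Tin (b : disp B) (i : node I) : {set {set com I}} :=
  [set agg B b j i | j : node I & is_arc I j i && (agg B b j i != set0)].
Definition Tout (b : disp B) (i : node I) : {set {set com I}} :=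
  [set agg B b i j | j : node I & is_arc I i j && (agg B b i j != set0)].

Definition meets (C D : {set com I}) : bool := C :&: D != set0.

(* x i j D is the variable x_{ij}^D (only meaningful for is_arc (i,j) and D in G_b^{ij}) *)
Definition PA_feasible (x : node I -> node I -> {set com I} -> R)
  (y : node I -> node I -> R) : Prop :=
  (forall i j, is_arc I i j -> 0 <= y i j <= 1) /\
  (forall b i j D, is_arc I i j -> D \in G b i j -> 0 <= x i j D) /\
  (forall b i, \sum_(j | is_arc I i j) \sum_(D in G b i j) x i j D
             - \sum_(j | is_arc I j i) \sum_(D in G b j i) x j i D
             = \sum_(k in Kb B b) supply I k i) /\
  (forall i j, is_arc I i j ->
     \sum_b \sum_(D in G b i j) x i j D <= cap I i j * y i j) /\
  (forall b i j D, is_arc I i j -> D \in G b i j ->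
     x i j D <= (\sum_(k in D) dem I k) * y i j).

Definition PA_obj (x : node I -> node I -> {set com I} -> R)
  (y : node I -> node I -> R) : R :=
  \sum_i \sum_(j | is_arc I i j)
     (ucost I i j * \sum_b \sum_(D in G b i j) x i j D + fcost I i j * y i j).

(* zin b i C D is z_{CD}^{ib} (C in check-T, D in M),
   zout b i D C is z_{DC}^{ib} (D in M, C in hat-T). *)
Definition PAe_feasible (x : node I -> node I -> {set com I} -> R)
  (y : node I -> node I -> R)
  (zin : disp B -> node I -> {set com I} -> {set com I} -> R)
  (zout : disp B -> node I -> {set com I} -> {set com I} -> R) : Prop :=
  PA_feasible x y /\
  forall b i, Lset b i != set0 ->
   [/\ (forall C D, C \in Tin b i -> D \in M b i -> meets C D -> 0 <= zin b i C D),
       (forall D C, D \in M b i -> C \in Tout b i -> meets C D -> 0 <= zout b i D C),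
       (forall D, D \in M b i ->
          \sum_(j | is_arc I i j && (D \in [set [set k] | k in Dis b i j])) x i j D
          - \sum_(j | is_arc I j i && (D \in [set [set k] | k in Dis b j i])) x j i D
          + \sum_(C in Tout b i | meets C D) zout b i D C
          - \sum_(C in Tin b i | meets C D) zin b i C D
          = \sum_(k in D) supply I k i),
       (forall C, C \in Tin b i ->
          \sum_(D in M b i | meets C D) zin b i C D
          - \sum_(j | is_arc I j i && (agg B b j i == C)) x j i C = 0) &
       (forall C, C \in Tout b i ->
          \sum_(j | is_arc I i j && (agg B b i j == C)) x i j C
          - \sum_(D in M b i | meets C D) zout b i D C = 0)].

End PAdefs.

(* Main.v *)
Require Import Defs.
From mathcomp Require Import ring lra.
From HB Require Import structures.
From mathcomp Require Import all_boot all_order all_algebra.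
Import Order.TTheory GRing.Theory Num.Theory.
Local Open Scope ring_scope.

Section Helpers.
Variables (R : realFieldType) (T N : finType).

Lemma part_sum (K A : {set T}) (F : T -> R) : A \subset K ->
  \sum_(D in (if A == set0 then set0 else [set A]) :|: [set [set k] | k in K :\: A])
     \sum_(k in D) F k = \sum_(k in K) F k.
Proof.
move=> sAK.
have himg : \sum_(D in [set [set k] | k in K :\: A]) \sum_(k in D) F k
            = \sum_(k in K :\: A) F k.
  rewrite big_imset /=; last by move=> x y _ _; apply: set1_inj.
  by apply: eq_bigr => k _; rewrite big_set1.
case: eqP => [A0 | /eqP A0].
  by rewrite set0U himg A0 setD0.
rewrite big_setU1 /=; last first.
  apply/imsetP => -[k]; rewrite inE => /andP [kA _] eA.
  by move: kA; rewrite eA set11.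
by rewrite himg (@big_setID _ _ _ _ K A) (setIidPr sAK).
Qed.

Lemma M_sum (K L C : {set T}) (F : T -> R) : L \subset K -> C \subset K ->
  \sum_(D in [set [set k] | k in L] :|: (if K :\: L == set0 then set0 else [set K :\: L]))
     \sum_(k in C :&: D) F k = \sum_(k in C) F k.
Proof.
move=> sLK sCK.
have eL : K :\: (K :\: L) = L.
  apply/setP => k; rewrite !inE; case kL: (k \in L); rewrite ?andbT //=.
  - by rewrite (subsetP sLK).
  - by case: (k \in K).
rewrite setUC.
have eI D : \sum_(k in C :&: D) F k = \sum_(k in D) (if k \in C then F k else 0).
  by rewrite -big_mkcondr; apply: eq_bigl => k; rewrite in_setI andbC.
under eq_bigr => D _ do rewrite eI.
have := @part_sum K (K :\: L) (fun k => if k \in C then F k else 0) (subsetDl _ _).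
rewrite eL => ->.
rewrite -big_mkcondr; apply: eq_bigl => k.
by case kC: (k \in C); rewrite ?andbT ?andbF // (subsetP sCK).
Qed.

Lemma dis_sum (K L A D : {set T}) (F : T -> R) :
  L \subset K -> A \subset K -> K :\: A \subset L ->
  D \in [set [set k] | k in L] :|: (if K :\: L == set0 then set0 else [set K :\: L]) ->
  (if D \in [set [set k] | k in K :\: A] then \sum_(k in D) F k else 0)
  = \sum_(k in D :\: A) F k.
Proof.
move=> sLK sAK sKAL; rewrite inE => /orP [/imsetP [k0 k0L ->] | ].
  rewrite mem_imset; last exact: set1_inj.
  case: ifP => k0KA.
    rewrite (_ : [set k0] :\: A = [set k0]) //.
    apply/setP => k; rewrite !inE.
    case: (k =P k0) => [-> | ]; last by rewrite andbF.
    by move: k0KA; rewrite !inE andbT => /andP [].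
  rewrite (_ : [set k0] :\: A = set0) ?big_set0 //.
  apply/setP => k; rewrite !inE.
  case: (k =P k0) => [-> | ]; last by rewrite andbF.
  by move: k0KA; rewrite !inE (subsetP sLK _ k0L) andbT => /negbFE ->.
case: ifP => _; first by rewrite inE.
rewrite inE => /eqP ->.
have -> : (K :\: L \in [set [set k] | k in K :\: A]) = false.
  apply/negbTE/imsetP => -[k kKA eKL].
  have : k \in K :\: L by rewrite eKL set11.
  by rewrite inE (subsetP sKAL _ kKA).
rewrite (_ : (K :\: L) :\: A = set0) ?big_set0 //.
apply/setP => k; rewrite !inE.
case kL: (k \in L) => //=; case kA: (k \in A) => //=; case kK: (k \in K) => //.
by move: (subsetP sKAL k); rewrite !inE kA kK kL => /(_ isT).
Qed.

Lemma drop_cond (S : {set {set T}}) (Q : pred {set T}) (f : {set T} -> R) :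
  (forall C, ~~ Q C -> f C = 0) ->
  \sum_(C in S | Q C) f C = \sum_(C in S) f C.
Proof.
move=> h; rewrite big_mkcondr; apply: eq_bigr => C _.
by case: ifP => // /negbT /h ->.
Qed.

Lemma regroup (S : {set {set T}}) (P : pred N) (a : N -> {set T})
  (g : N -> {set T} -> R) :
  (forall C, C \in S -> C != set0) ->
  (forall j, P j -> (a j \in S) = (a j != set0)) ->
  (forall j, P j -> a j = set0 -> g j (a j) = 0) ->
  \sum_(C in S) \sum_(j | P j && (a j == C)) g j C = \sum_(j | P j) g j (a j).
Proof.
move=> hS hP h0.
rewrite [RHS](bigID (fun j => a j == set0)) /= [X in _ = X + _]big1 ?add0r; last first.
  by move=> j /andP [Pj /eqP aj0]; exact: h0 Pj aj0.
rewrite (partition_big a (mem S)) /=; last first.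
  by move=> j /andP [Pj nz]; rewrite hP.
apply: eq_bigr => C CS; apply: eq_big.
  move=> j /=; case Pj: (P j) => //=.
  by case: (a j =P C) => [-> | _]; rewrite ?andbF ?andbT ?hS.
by move=> j /andP [_ /eqP ->].
Qed.

Lemma part_K (D : finType) (Kb : D -> {set T}) (F : T -> R) :
  (forall k, exists! b, k \in Kb b) ->
  \sum_b \sum_(k in Kb b) F k = \sum_k F k.
Proof.
move=> hu.
under eq_bigr => b _ do rewrite big_mkcond /=.
rewrite exchange_big /=; apply: eq_bigr => k _.
rewrite -big_mkcond /=.
have [b0 [kb0 hb0]] := hu k.
rewrite (eq_bigl (fun b => b == b0)) ?big_pred1_eq //.
move=> b; apply/idP/eqP => [kb | -> //].
by apply/esym/hb0.
Qed.

End Helpers.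

Lemma part1 (R : realFieldType) :
  (forall (I : mcnd R) (B : paggr I), mcnd_wf I -> paggr_wf B ->
     forall (xb : com I -> node I -> node I -> R) (yb : node I -> node I -> R),
       DA_feasible I xb yb ->
       exists (zin zout : disp B -> node I -> {set com I} -> {set com I} -> R),
         PAe_feasible B (fun i j D => \sum_(k in D) xb k i j) yb zin zout /\
         PA_obj B (fun i j D => \sum_(k in D) xb k i j) yb = DA_obj I xb yb).
Proof.
move=> I B [irr [dem0 arcw]] [Kne [orig_eq [uniq_b aggsub]]] xb yb
  [ybnd [xnn [cons [capc link]]]].
have GS b i j : is_arc I i j ->
    \sum_(D in G B b i j) \sum_(k in D) xb k i j = \sum_(k in Kb B b) xb k i j.
  move=> a; rewrite /G /Dis; exact: (@part_sum _ _ _ _ (fun k => xb k i j) (aggsub b i j a)).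
have capS i j : is_arc I i j ->
    \sum_b \sum_(D in G B b i j) \sum_(k in D) xb k i j = \sum_k xb k i j.
  move=> a; under eq_bigr => b _ do rewrite GS //.
  exact: (@part_K _ _ _ _ (fun k => xb k i j) uniq_b).
exists (fun b i C D => \sum_(j | is_arc I j i && (agg B b j i == C)) \sum_(k in C :&: D) xb k j i).
exists (fun b i D C => \sum_(j | is_arc I i j && (agg B b i j == C)) \sum_(k in C :&: D) xb k i j).
split; last first.
  rewrite /PA_obj /DA_obj; apply: eq_bigr => i _; apply: eq_bigr => j a.
  by rewrite capS.
split.
  split; first exact: ybnd.
  split.
    by move=> b i j D a _; apply: sumr_ge0 => k _; exact: xnn.
  split.
    move=> b i.
    under eq_bigr => j a do rewrite (GS _ _ _ a).
    under [X in _ - X]eq_bigr => j a do rewrite (GS _ _ _ a).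
    rewrite exchange_big [X in _ - X]exchange_big -sumrB.
    by apply: eq_bigr => k _; exact: cons.
  split.
    by move=> i j a; rewrite capS //; exact: capc.
  move=> b i j D a _; rewrite mulr_suml; apply: ler_sum => k _; exact: link.
move=> b i Lne.
have sLK : Lset B b i \subset Kb B b.
  by apply/subsetP => k; rewrite /Lset inE => /andP [].
have sKAout j : is_arc I i j -> Kb B b :\: agg B b i j \subset Lset B b i.
  move=> a; apply/subsetP => k kD; rewrite /Lset inE (subsetP (subsetDl _ _) _ kD) /=.
  by apply/existsP; exists j; rewrite /Dis a kD orbT.
have sKAin j : is_arc I j i -> Kb B b :\: agg B b j i \subset Lset B b i.
  move=> a; apply/subsetP => k kD; rewrite /Lset inE (subsetP (subsetDl _ _) _ kD) /=.
  by apply/existsP; exists j; rewrite /Dis a kD.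
split.
- move=> C D _ _ _; apply: sumr_ge0 => j /andP [a _]; apply: sumr_ge0 => k _; exact: xnn.
- move=> D C _ _ _; apply: sumr_ge0 => j /andP [a _]; apply: sumr_ge0 => k _; exact: xnn.
- move=> D DM; rewrite /M in DM.
  have E1 : \sum_(j | is_arc I i j && (D \in [set [set k] | k in Dis B b i j])) \sum_(k in D) xb k i j
      = \sum_(j | is_arc I i j) \sum_(k in D :\: agg B b i j) xb k i j.
    rewrite big_mkcondr; apply: eq_bigr => j a; rewrite /Dis.
    exact: (@dis_sum _ _ _ _ _ _ (fun k => xb k i j) sLK (aggsub b i j a) (sKAout j a) DM).
  have E2 : \sum_(j | is_arc I j i && (D \in [set [set k] | k in Dis B b j i])) \sum_(k in D) xb k j i
      = \sum_(j | is_arc I j i) \sum_(k in D :\: agg B b j i) xb k j i.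
    rewrite big_mkcondr; apply: eq_bigr => j a; rewrite /Dis.
    exact: (@dis_sum _ _ _ _ _ _ (fun k => xb k j i) sLK (aggsub b j i a) (sKAin j a) DM).
  have E3 : \sum_(C in Tout B b i | meets C D)
        \sum_(j | is_arc I i j && (agg B b i j == C)) \sum_(k in C :&: D) xb k i j
      = \sum_(j | is_arc I i j) \sum_(k in agg B b i j :&: D) xb k i j.
    rewrite (@drop_cond _ _ _ (fun C => meets C D)
     (fun C => \sum_(j | is_arc I i j && (agg B b i j == C)) \sum_(k in C :&: D) xb k i j)); last first.
      move=> C; rewrite /meets negbK => /eqP CD; apply: big1 => j _.
      by rewrite CD big_set0.
    apply: (@regroup _ _ _ _ _ _ (fun j C => \sum_(k in C :&: D) xb k i j)).
    + by move=> C /imsetP [j]; rewrite inE => /andP [_ nz] ->.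
    + move=> j a; case nz: (agg B b i j != set0).
        by apply/imsetP; exists j; rewrite // inE a nz.
      apply/negbTE/imsetP => -[j']; rewrite inE => /andP [_ nz'] e.
      by rewrite e nz' in nz.
    + by move=> j a ->; rewrite set0I big_set0.
  have E4 : \sum_(C in Tin B b i | meets C D)
        \sum_(j | is_arc I j i && (agg B b j i == C)) \sum_(k in C :&: D) xb k j i
      = \sum_(j | is_arc I j i) \sum_(k in agg B b j i :&: D) xb k j i.
    rewrite (@drop_cond _ _ _ (fun C => meets C D)
     (fun C => \sum_(j | is_arc I j i && (agg B b j i == C)) \sum_(k in C :&: D) xb k j i)); last first.
      move=> C; rewrite /meets negbK => /eqP CD; apply: big1 => j _.
      by rewrite CD big_set0.
    apply: (@regroup _ _ _ _ _ _ (fun j C => \sum_(k in C :&: D) xb k j i)).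
    + by move=> C /imsetP [j]; rewrite inE => /andP [_ nz] ->.
    + move=> j a; case nz: (agg B b j i != set0).
        by apply/imsetP; exists j; rewrite // inE a nz.
      apply/negbTE/imsetP => -[j']; rewrite inE => /andP [_ nz'] e.
      by rewrite e nz' in nz.
    + by move=> j a ->; rewrite set0I big_set0.
  rewrite E1 E2 E3 E4.
  rewrite (eq_bigr (fun k => \sum_(j | is_arc I i j) xb k i j - \sum_(j | is_arc I j i) xb k j i));
    last by move=> k _; rewrite cons.
  rewrite sumrB exchange_big [X in _ = _ - X]exchange_big /=.
  have S1 : \sum_(j | is_arc I i j) \sum_(k in D) xb k i j =
    \sum_(j | is_arc I i j) \sum_(k in D :\: agg B b i j) xb k i j +
    \sum_(j | is_arc I i j) \sum_(k in agg B b i j :&: D) xb k i j.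
    rewrite -big_split; apply: eq_bigr => j _.
    by rewrite (@big_setID _ _ _ _ D (agg B b i j)) /= setIC addrC.
  have S2 : \sum_(j | is_arc I j i) \sum_(k in D) xb k j i =
    \sum_(j | is_arc I j i) \sum_(k in D :\: agg B b j i) xb k j i +
    \sum_(j | is_arc I j i) \sum_(k in agg B b j i :&: D) xb k j i.
    rewrite -big_split; apply: eq_bigr => j _.
    by rewrite (@big_setID _ _ _ _ D (agg B b j i)) /= setIC addrC.
  rewrite S1 S2; ring.
- move=> C CT.
  have sCK : C \subset Kb B b.
    by move: CT => /imsetP [j]; rewrite inE => /andP [a _] ->; exact: aggsub.
  rewrite (@drop_cond _ _ _ (meets C)
     (fun D => \sum_(j | is_arc I j i && (agg B b j i == C)) \sum_(k in C :&: D) xb k j i)); last first.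
    move=> D; rewrite /meets negbK => /eqP CD; apply: big1 => j _.
    by rewrite CD big_set0.
  rewrite exchange_big /=; apply/eqP; rewrite subr_eq0; apply/eqP; apply: eq_bigr => j _.
  rewrite /M; exact: (@M_sum _ _ _ _ _ (fun k => xb k j i) sLK sCK).
- move=> C CT.
  have sCK : C \subset Kb B b.
    by move: CT => /imsetP [j]; rewrite inE => /andP [a _] ->; exact: aggsub.
  rewrite (@drop_cond _ _ _ (meets C)
     (fun D => \sum_(j | is_arc I i j && (agg B b i j == C)) \sum_(k in C :&: D) xb k i j)); last first.
    move=> D; rewrite /meets negbK => /eqP CD; apply: big1 => j _.
    by rewrite CD big_set0.
  rewrite [X in _ - X]exchange_big /=; apply/eqP; rewrite subr_eq0; apply/eqP/esym; apply: eq_bigr => j _.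
  rewrite /M; exact: (@M_sum _ _ _ _ _ (fun k => xb k i j) sLK sCK).
Qed.
Definition o0 : 'I_3 := Ordinal (isT : (0 < 3)%N).
Definition o1 : 'I_3 := Ordinal (isT : (1 < 3)%N).
Definition o2 : 'I_3 := Ordinal (isT : (2 < 3)%N).
Lemma sum3 (R : realFieldType) (f : 'I_3 -> R) : \sum_j f j = f o0 + f o1 + f o2.
Proof. rewrite !big_ord_recr big_ord0 /= add0r. congr (f _ + f _ + f _); exact: val_inj. Qed.
Lemma I3cases (P : 'I_3 -> Prop) : P o0 -> P o1 -> P o2 -> forall i, P i.
Proof.
move=> H0 H1 H2 i; have: i \in [:: o0; o1; o2] by case: i => [[|[|[|m]]] h].
by rewrite !inE => /or3P [] /eqP ->.
Qed.

Lemma sumT (R : realFieldType) (F : bool -> R) : \sum_(k in [set: bool]) F k = F true + F false.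
Proof. by rewrite (eq_bigl predT) ?big_bool // => k; rewrite inE. Qed.

Definition exI (R : realFieldType) : mcnd R :=
  @MCND R 'I_3 bool [rel i j : 'I_3 | (val i == 0%N) && (val j != 0%N)]
    (fun _ _ => 2) (fun _ _ => 0) (fun _ _ => 0)
    (fun _ => o0) (fun k => if k then o2 else o1) (fun _ => 1).

Definition exB (R : realFieldType) : paggr (exI R) :=
  @PAggr R (exI R) 'I_1 (fun _ => setT) (fun _ _ _ => setT).

Lemma part2 (R : realFieldType) :
  (exists (I : mcnd R) (B : paggr I), mcnd_wf I /\ paggr_wf B /\
     exists (x : node I -> node I -> {set com I} -> R) (y : node I -> node I -> R)
            (zin zout : disp B -> node I -> {set com I} -> {set com I} -> R),
       PAe_feasible B x y zin zout /\
       ~ (exists (xb : com I -> node I -> node I -> R) (yb : node I -> node I -> R),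
            DA_feasible I xb yb /\
            (forall i j, is_arc I i j -> yb i j = y i j) /\
            (forall b i j D, is_arc I i j -> D \in G B b i j ->
               x i j D = \sum_(k in D) xb k i j))).
Proof.
exists (exI R), (exB R).
have GE b i j : G (exB R) b i j = [set setT].
  rewrite /G /Dis /= setDv.
  have -> : (setT == set0 :> {set bool}) = false.
    by apply/negbTE/set0Pn; exists true; rewrite inE.
  apply/setP => D; rewrite !inE; apply/idP/idP => [/orP [// | /imsetP [k]] | ->//].
  by rewrite inE.
split.
  split; first by move=> i /=; case: eqP => //= ->.
  split; first by move=> k /=; exact: ler01.
  by move=> i j _ /=; split => //; lra.
split.
  split; first by move=> b; apply/set0Pn; exists true; rewrite inE.
  split; first by [].
  split; first by move=> k; exists ord0; split => [|b _]; [rewrite /= inE | rewrite [b]ord1].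
  by move=> b i j _; exact: subsetT.
exists (fun i j D => if is_arc (exI R) i j then 1 else 0), (fun _ _ => 1/2), (fun _ _ _ _ => 0), (fun _ _ _ _ => 0).
split.
  split.
    split; first by move=> i j _; lra.
    split; first by move=> b i j D _ _; case: ifP => _; lra.
    split.
      move=> b i; under eq_bigr do rewrite GE big_set1.
      under [X in _ - X]eq_bigr do rewrite GE big_set1.
      rewrite big_mkcond sum3 [X in _ - X]big_mkcond sum3 /= sumT.
      move: i; apply: I3cases; rewrite /= /supply /=; lra.
    split.
      move=> i j a; rewrite big_ord1 GE big_set1 a; lra.
    move=> b i j D a; rewrite GE inE => /eqP ->.
    rewrite a /= sumT.
    lra.
  move=> b i; rewrite /Lset (_ : [set k in _ | _] = set0) ?eqxx //.
  apply/setP => k; rewrite !inE; apply/negbTE/existsP => -[j].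
  by rewrite /Dis /= setDv !inE !andbF.
case=> xb [yb [[ybnd [xnn [cons [capc link]]]] [yeq _]]].
have c2 := cons false o2.
have c0 := cons false o0.
have l01 := link false o0 o1 isT.
rewrite yeq // in l01.
rewrite big_mkcond sum3 [X in _ - X]big_mkcond sum3 /= /supply /= in c2.
rewrite big_mkcond sum3 [X in _ - X]big_mkcond sum3 /= /supply /= in c0.
rewrite /= in l01.
lra.
Qed.

Theorem theorem1 (R : realFieldType) :
  (* (i) DA-feasible solutions map to PAe-feasible ones with the same cost *)
  (forall (I : mcnd R) (B : paggr I), mcnd_wf I -> paggr_wf B ->
     forall (xb : com I -> node I -> node I -> R) (yb : node I -> node I -> R),
       DA_feasible I xb yb ->
       exists (zin zout : disp B -> node I -> {set com I} -> {set com I} -> R),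
         PAe_feasible B (fun i j D => \sum_(k in D) xb k i j) yb zin zout /\
         PA_obj B (fun i j D => \sum_(k in D) xb k i j) yb = DA_obj I xb yb) /\
  (* (ii) the converse fails in general *)
  (exists (I : mcnd R) (B : paggr I), mcnd_wf I /\ paggr_wf B /\
     exists (x : node I -> node I -> {set com I} -> R) (y : node I -> node I -> R)
            (zin zout : disp B -> node I -> {set com I} -> {set com I} -> R),
       PAe_feasible B x y zin zout /\
       ~ (exists (xb : com I -> node I -> node I -> R) (yb : node I -> node I -> R),
            DA_feasible I xb yb /\
            (forall i j, is_arc I i j -> yb i j = y i j) /\
            (forall b i j D, is_arc I i j -> D \in G B b i j ->
               x i j D = \sum_(k in D) xb k i j))).
Proof. split; [exact: part1 | exact: part2]. Qed.
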